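(* Fix $n\ge2$ and $1\le m\le n$. Consider the following game. Alice chooses $\epsilon_0>0$ and Bob chooses an $n\times n$ $(m,\epsilon_0)$-matrix $A_0$; then Alice chooses $\epsilon_1>0$ (knowing $A_0$) and Bob chooses an $n\times n$ $(m,\epsilon_1)$-matrix $A_1$; and so on inductively, producing $(A_s)_{s\ge0}$. Let $A_{r,s}=A_rA_{r+1}\cdots A_s$ for $r<s$. Alice wins if there exist $\bar\epsilon_r>0$ ($r\ge0$) such that for every $r\ge0$ and every $s>r$, $A_{r,s}$ is an $(m,\bar\epsilon_r)$-matrix, and $\bar\epsilon_r\to0$ as $r\to\infty$; otherwise Bob wins. Then Alice has a winning strategy.
   Context: For $\epsilon>0$ and $1\le m\le n$, an $n\times n$ nonnegative matrix $A=(a_{ij})$ with positive diagonal entries is an $(m,\epsilon)$-matrix if $a_{ij}/a_{jj}<\epsilon$ for all $j\le m$ and $i\ne j$. *)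

(* Defs.v *)
From HB Require Import structures.
From mathcomp Require Import all_boot all_order all_algebra.
From mathcomp Require Import all_classical all_reals all_analysis.
Set Implicit Arguments. Unset Strict Implicit. Unset Printing Implicit Defensive.
Import Order.TTheory GRing.Theory Num.Theory.
Local Open Scope ring_scope.

(* An n x n nonnegative matrix with positive diagonal entries such that
   a_ij / a_jj < eps for all columns j <= m (1-indexed, i.e. val j < m
   0-indexed) and all rows i <> j. *)
Definition meps_matrix (R : realType) (n m : nat) (eps : R) (A : 'M[R]_n) : Prop :=
  (forall i j : 'I_n, 0 <= A i j) /\
  (forall i : 'I_n, 0 < A i i) /\
  (forall i j : 'I_n, (val j < m)%N -> i != j -> A i j / A j j < eps).

Definition mxprod_range (R : realType) (n : nat) (A : nat -> 'M[R]_n) (r s : nat)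
  : 'M[R]_n := \big[mulmx/1%:M]_(r <= i < s.+1) A i.

(* Main.v *)
Require Import Defs.
From HB Require Import structures.
From mathcomp Require Import all_boot all_order all_algebra.
From mathcomp Require Import all_classical all_reals all_analysis.
From mathcomp Require Import ring lra zify.
Set Implicit Arguments. Unset Strict Implicit.
Import Order.TTheory GRing.Theory Num.Theory.
Import numFieldNormedType.Exports.
Local Open Scope classical_set_scope.
Local Open Scope ring_scope.

Lemma prod_recr (R : realType) (n : nat) (A : nat -> 'M[R]_n) r s :
  (r <= s)%N -> mxprod_range A r s.+1 = mxprod_range A r s *m A s.+1.
Proof.
move=> /subnKC <-; move: (s - r)%N => k.
rewrite /mxprod_range.
elim: k r => [|k IH] r.
  rewrite addn0 big_ltn // big_ltn // big_geq // big_ltn // big_geq //.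
  by rewrite !mulmx1.
rewrite big_ltn; last by lia.
rewrite addnS -addSn IH.
rewrite [in RHS]big_ltn; last by lia.
by rewrite mulmxA.
Qed.

Lemma prod_base (R : realType) (n : nat) (A : nat -> 'M[R]_n) r :
  mxprod_range A r r = A r.
Proof. by rewrite /mxprod_range big_ltn // big_geq // mulmx1. Qed.

Lemma sum_ge_term (R : realType) (I : finType) (F : I -> R) i :
  (forall j, 0 <= F j) -> F i <= \sum_j F j.
Proof.
move=> H; rewrite (bigD1 i) //= lerDl; apply: sumr_ge0 => j _; exact: H.
Qed.

Lemma step (R : realType) (n : nat) (P Q : 'M[R]_n) i j e :
 (forall a b, 0 <= P a b) -> (forall a b, 0 <= Q a b) -> 0 < P j j -> 0 < Q j j ->
 0 <= e -> (forall k, k != j -> Q k j / Q j j < e) ->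
 (P *m Q) i j / (P *m Q) j j <= P i j / P j j + e * \sum_k (P i k / P j j).
Proof.
move=> hP hQ hPj hQj he hk.
have hjj : P j j * Q j j <= (P *m Q) j j.
  by rewrite mxE (bigD1 j) //= lerDl; apply: sumr_ge0 => k _; exact: mulr_ge0.
have hpos : 0 < P j j * Q j j by exact: mulr_gt0.
have hij : 0 <= (P *m Q) i j.
  by rewrite mxE; apply: sumr_ge0 => k _; exact: mulr_ge0.
apply: (le_trans (y := (P *m Q) i j / (P j j * Q j j))).
  apply: ler_wpM2l => //; rewrite lef_pV2 ?posrE //; exact: lt_le_trans hjj.
rewrite ler_pdivrMr //.
have -> : (P i j / P j j + e * \sum_k (P i k / P j j)) * (P j j * Q j j)
   = P i j * Q j j + \sum_k (P i k * (e * Q j j)).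
  rewrite -!mulr_suml; field; exact: lt0r_neq0.
rewrite mxE (bigD1 j) //= lerD2l.
apply: (le_trans (y := \sum_(k | k != j) P i k * (e * Q j j))).
  apply: ler_sum => k hkj; apply: ler_wpM2l => //.
  have := hk k hkj; rewrite ltr_pdivrMr // mulrC => /ltW //.
rewrite [leRHS](bigD1 j) //= lerDr; apply: mulr_ge0 => //; exact: mulr_ge0 (ltW hQj).
Qed.

Definition Cst (R : realType) (n : nat) (h : seq 'M[R]_n) : R :=
  \sum_(r < size h) \sum_i \sum_j \sum_k
    `| mxprod_range (fun t => nth 0 h t) r (size h).-1 i k| /
    `| mxprod_range (fun t => nth 0 h t) r (size h).-1 j j|.

Lemma Cst_ge0 (R : realType) (n : nat) (h : seq 'M[R]_n) : 0 <= Cst h.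
Proof.
by apply: sumr_ge0 => r _; apply: sumr_ge0 => i _; apply: sumr_ge0 => j _;
  apply: sumr_ge0 => k _; apply: divr_ge0.
Qed.

Lemma Cst_mk (R : realType) (n : nat) (A : nat -> 'M[R]_n) s r i j :
  (r <= s)%N -> 0 < mxprod_range A r s j j ->
  (forall k, 0 <= mxprod_range A r s i k) ->
  \sum_k (mxprod_range A r s i k / mxprod_range A r s j j) <= Cst (mkseq A s.+1).
Proof.
move=> hrs hjj hik.
have E : mxprod_range (fun t => nth 0 (mkseq A s.+1) t) r (size (mkseq A s.+1)).-1
   = mxprod_range A r s.
  rewrite size_mkseq /= /mxprod_range; apply: eq_big_nat => t /andP [_ ht].
  by rewrite nth_mkseq.
have hr : (r < size (mkseq A s.+1))%N by rewrite size_mkseq ltnS.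
rewrite /Cst.
apply: le_trans (sum_ge_term (Ordinal hr) _); last first.
  by move=> r' ; apply: sumr_ge0 => i' _; apply: sumr_ge0 => j' _;
    apply: sumr_ge0 => k _; apply: divr_ge0.
rewrite /= E.
apply: le_trans (sum_ge_term i _); last first.
  by move=> i'; apply: sumr_ge0 => j' _; apply: sumr_ge0 => k _; apply: divr_ge0.
apply: le_trans (sum_ge_term j _); last first.
  by move=> j'; apply: sumr_ge0 => k _; apply: divr_ge0.
apply: ler_sum => k _.
by rewrite !ger0_norm // ltW.
Qed.

Lemma fin_ineq (R : realType) (a b w u v : R) :
  a < w - u -> u = 2 * v -> b <= v -> a + b < w - v.
Proof. move=> h1 h2 h3; lra. Qed.

Theorem theorem2p3 (R : realType) (n m : nat) :
  (2 <= n)%N -> (1 <= m)%N -> (m <= n)%N ->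
  exists alice : seq 'M[R]_n -> R,
    (forall h, 0 < alice h) /\
    forall A : nat -> 'M[R]_n,
      (forall s : nat, meps_matrix m (alice (mkseq A s)) (A s)) ->
      exists epsbar : nat -> R,
        (forall r, 0 < epsbar r) /\
        (forall r s : nat, (r < s)%N -> meps_matrix m (epsbar r) (mxprod_range A r s)) /\
        (epsbar @ \oo --> (0 : R)).
Proof.
move=> hn hm hmn.
pose q : R := 2^-1.
have q0 : 0 < q by rewrite /q invr_gt0.
have qS : forall s, q ^+ s = 2 * q ^+ s.+1.
  by move=> s; rewrite exprS mulrA /q mulfV ?mul1r.
exists (fun h => q ^+ size h / (1 + Cst h)).
have C1 : forall h : seq 'M[R]_n, 0 < 1 + Cst h.
  by move=> h; have := Cst_ge0 h; lra.
split.
  by move=> h; apply: divr_gt0; [exact: exprn_gt0 | exact: C1].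
move=> A HA.
have inv : forall r d,
  (forall i j, 0 <= mxprod_range A r (r + d)%N i j) /\
  (forall i, 0 < mxprod_range A r (r + d)%N i i) /\
  (forall i j : 'I_n, (val j < m)%N -> i != j ->
     mxprod_range A r (r + d)%N i j / mxprod_range A r (r + d)%N j j
       < 2 * q ^+ r - q ^+ (r + d)%N).
  move=> r; elim=> [|d [IH1 [IH2 IH3]]].
    rewrite addn0 prod_base.
    have [h1 [h2 h3]] := HA r.
    split => //; split => // i j hj hij.
    apply: lt_le_trans (h3 i j hj hij) _.
    rewrite size_mkseq ler_pdivrMr ?C1 //.
    have -> : 2 * q ^+ r - q ^+ r = q ^+ r by ring.
    rewrite mulrDr mulr1 lerDl; apply: mulr_ge0; last exact: Cst_ge0.
    exact: ltW (exprn_gt0 _ q0).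
  rewrite addnS prod_recr ?leq_addr //.
  set M := mxprod_range A r (r + d)%N.
  set Q := A (r + d)%N.+1.
  have [hQ1 [hQ2 hQ3]] := HA (r + d)%N.+1.
  set e := _ / _ in hQ3.
  have he : 0 <= e by apply: divr_ge0; [exact: ltW (exprn_gt0 _ q0) | exact: ltW (C1 _)].
  have hMQ : forall i j, 0 <= (M *m Q) i j.
    by move=> i j; rewrite mxE; apply: sumr_ge0 => k _; exact: mulr_ge0.
  split => //.
  have hdiag : forall j, 0 < (M *m Q) j j.
    move=> j; apply: lt_le_trans (mulr_gt0 (IH2 j) (hQ2 j)) _.
    by rewrite mxE (bigD1 j) //= lerDl; apply: sumr_ge0 => k _; exact: mulr_ge0.
  split => // i j hj hij.
  have hstep := @step _ _ M Q i j e IH1 hQ1 (IH2 j) (hQ2 j) he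
     (fun k hk => hQ3 k j hj hk).
  apply: le_lt_trans hstep _.
  have hS := @Cst_mk _ _ A (r + d)%N r i j (leq_addr d r) (IH2 j) (IH1 i).
  have heS : e * \sum_k (M i k / M j j) <= q ^+ (r + d)%N.+1.
    apply: le_trans (ler_wpM2l he hS) _.
    rewrite /e size_mkseq mulrAC ler_pdivrMr ?C1 //.
    apply: ler_wpM2l; first exact: ltW (exprn_gt0 _ q0).
    by rewrite lerDr.
  exact: (fin_ineq (IH3 i j hj hij) (qS (r + d)%N) heS).
exists (fun r => 2 * q ^+ r).
split; first by move=> r; apply: mulr_gt0 => //; exact: exprn_gt0.
split.
  move=> r s hrs.
  have := inv r (s - r)%N; rewrite subnKC; last exact: ltnW.
  move=> -[h1 [h2 h3]].
  split => //; split => // i j hj hij.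
  apply: lt_le_trans (h3 i j hj hij) _.
  by rewrite lerBlDr lerDl; exact: ltW (exprn_gt0 s q0).
apply: (@cvg_geometric R 2 q).
by rewrite ger0_norm ?ltW // /q invf_lt1 // ltr1n.
Qed.
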